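(* Let $P$ be a poset with $n$ elements that has a unique minimal element, and suppose this minimal element is covered by exactly one element. Then $P$ has exactly $2(n-1)!-(n-2)!$ quasi-tangled labelings.
   Context: A labeling is a bijection $L:P\to[n]$; it is a linear extension if $x<_P y$ implies $L(x)<L(y)$. Promotion $\partial$: for non-maximal $x$, the $L$-successor of $x$ is the element greater than $x$ with minimal label; the promotion chain is $v_1=L^{-1}(1)$, $v_{i+1}$ the $L$-successor of $v_i$, ending at the first maximal $v_m$; $\partial(L)(x)=L(x)-1$ off the chain, $\partial(L)(v_i)=L(v_{i+1})-1$ for $i<m$, $\partial(L)(v_m)=n$. The sorting time of $L$ is the least $k\ge0$ with $\partial^k(L)$ a linear extension; $L$ is quasi-tangled if its sorting time is $n-2$. *)

(* Defs.v *)
From HB Require Import structures.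
From mathcomp Require Import all_boot all_order.
Set Implicit Arguments. Unset Strict Implicit. Unset Printing Implicit Defensive.
Import Order.TTheory.
Local Open Scope order_scope.

(* Labels are 0-based: a labeling L : P -> nat is a bijection onto
   {0,...,n-1}, label k here standing for label k+1 of the paper. *)

Section Promotion.
Variables (d : Order.disp_t) (P : finPOrderType d).

Definition minimal (x : P) : bool := [forall y : P, ~~ (y < x)].
Definition maximal (x : P) : bool := [forall y : P, ~~ (x < y)].
Definition covers (x y : P) : bool :=
  (x < y) && [forall z : P, ~~ ((x < z) && (z < y))].

Definition is_linext (L : P -> nat) : bool :=
  [forall x : P, forall y : P, (x < y) ==> (L x < L y)%N].

Definition lsucc (L : P -> nat) (x : P) : option P :=
  [pick y : P | (x < y) && [forall z : P, (x < z) ==> (L y <= L z)%N]].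

Fixpoint chain_from (L : P -> nat) (fuel : nat) (x : P) : seq P :=
  match fuel with
  | 0 => [:: x]
  | f.+1 => if maximal x then [:: x] else
            match lsucc L x with
            | None => [:: x]
            | Some y => x :: chain_from L f y
            end
  end.

Definition prom_chain (L : P -> nat) : seq P :=
  match [pick x : P | L x == 0%N] with
  | None => [::]
  | Some v1 => chain_from L #|P| v1
  end.

Definition promotion (L : P -> nat) : P -> nat := fun x =>
  let c := prom_chain L in
  if x \in c then
    let i := index x c in
    if (i.+1 < size c)%N then (L (nth x c i.+1)).-1 else (#|P|).-1
  else (L x).-1.

Definition has_sorting_time (L : P -> nat) (k : nat) : bool :=
  is_linext (iter k promotion L) &&
  [forall j : 'I_k, ~~ is_linext (iter j promotion L)].

Definition quasi_tangled (L : P -> nat) : bool :=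
  has_sorting_time L (#|P| - 2).

End Promotion.

(* Main.v *)
Require Import Defs.
From HB Require Import structures.
From mathcomp Require Import all_boot all_order.
From mathcomp Require Import zify.
Set Implicit Arguments. Unset Strict Implicit. Unset Printing Implicit Defensive.
Import Order.TTheory.

Section Count.
Variables (D : finType) (n : nat).
Implicit Types (c e : 'I_n) (L : {ffun D -> 'I_n}) (x y : D).

Definition swp c c' (i : 'I_n) := if i == c then c' else if i == c' then c else i.

Lemma swpK c c' : involutive (swp c c').
Proof.
move=> i; rewrite /swp.
case: (eqVneq i c) => [->|H1]; first by case: (eqVneq c' c) => [->|H]; rewrite ?eqxx // H eqxx.
case: (eqVneq i c') => [->|H2]; first by rewrite eqxx.
by rewrite (negbTE H1) (negbTE H2).
Qed.

Definition Phi c c' L : {ffun D -> 'I_n} := [ffun p => swp c c' (L p)].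

Lemma Phi_inj c c' : injective (Phi c c').
Proof.
move=> L L' E; apply/ffunP => p; have := congr1 (fun f : {ffun D -> 'I_n} => f p) E; rewrite !ffunE.
by move/(congr1 (swp c c')); rewrite !swpK.
Qed.

Definition fiber x c := [set L : {ffun D -> 'I_n} | injectiveb L && (L x == c)].
Definition fiber2 x y c e := [set L : {ffun D -> 'I_n} | injectiveb L && (L x == c) && (L y == e)].

Lemma Phi_injb c c' L : injectiveb (Phi c c' L) = injectiveb L.
Proof.
apply/injectiveP/injectiveP => H p q.
  move=> E; apply: H; by rewrite !ffunE E.
by rewrite !ffunE => /(congr1 (swp c c')); rewrite !swpK => /H.
Qed.

Lemma fiber_le x c c' : #|fiber x c| <= #|fiber x c'|.
Proof.
rewrite -(card_imset _ (@Phi_inj c c')); apply: subset_leq_card.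
apply/subsetP => L' /imsetP [L]; rewrite !inE => /andP [Hi /eqP Hx] ->.
by rewrite Phi_injb Hi ffunE Hx /swp !eqxx.
Qed.

Lemma fiber2_le x y c e e' : e != c -> e' != c -> #|fiber2 x y c e| <= #|fiber2 x y c e'|.
Proof.
move=> He He'.
rewrite -(card_imset _ (@Phi_inj e e')); apply: subset_leq_card.
apply/subsetP => L' /imsetP [L]; rewrite !inE => /andP [/andP [Hi /eqP Hx] /eqP Hy] ->.
rewrite Phi_injb Hi !ffunE Hx Hy /swp eqxx /=.
by rewrite [c == e]eq_sym (negbTE He) [c == e']eq_sym (negbTE He') !eqxx.
Qed.

Lemma card_inj_split x : #|[set L : {ffun D -> 'I_n} | injectiveb L]| = \sum_c #|fiber x c|.
Proof.
rewrite -sum1_card (partition_big (fun L => L x) xpredT) //=.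
apply: eq_bigr => c _; rewrite -sum1_card; apply: eq_bigl => L; by rewrite !inE.
Qed.

Lemma fiber_split x y c : #|fiber x c| = \sum_e #|fiber2 x y c e|.
Proof.
rewrite -sum1_card (partition_big (fun L => L y) xpredT) //=.
apply: eq_bigr => e _; rewrite -sum1_card; apply: eq_bigl => L; by rewrite !inE.
Qed.

Lemma mcancel m K : 0 < m -> m * K = m`! -> K = m.-1`!.
Proof. by case: m => // m _; rewrite factS => /eqP; rewrite eqn_mul2l /= => /eqP. Qed.

Hypothesis HD : #|D| = n.

Lemma card_fiber x c : #|fiber x c| = n.-1`!.
Proof.
have H := card_inj_split x; rewrite card_inj_ffuns card_ord HD ffactnn in H.
have E : forall c', #|fiber x c'| = #|fiber x c| by move=> c'; apply/eqP; rewrite eqn_leq !fiber_le.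
rewrite (eq_bigr (fun _ => #|fiber x c|)) // sum_nat_const card_ord in H.
apply: mcancel (esym H); exact: leq_ltn_trans (leq0n c) (ltn_ord c).
Qed.

Lemma card_fiber2 x y c e : x != y -> e != c -> #|fiber2 x y c e| = n.-2`!.
Proof.
move=> Hxy Hec.
have H := fiber_split x y c; rewrite card_fiber in H.
rewrite (bigD1 c) //= in H.
have E0 : #|fiber2 x y c c| = 0.
  apply/eqP; rewrite cards_eq0; apply/eqP/setP => L; rewrite !inE.
  apply/negP => /andP [/andP [/injectiveP Hi /eqP A] /eqP B].
  by move: Hxy; rewrite (Hi x y) ?eqxx // A B.
rewrite E0 in H.
have E : forall e', e' != c -> #|fiber2 x y c e'| = #|fiber2 x y c e|.
  by move=> e' He'; apply/eqP; rewrite eqn_leq !fiber2_le.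
rewrite add0n (eq_bigr (fun _ => #|fiber2 x y c e|)) // sum_nat_const in H.
rewrite cardC1 card_ord in H.
apply: mcancel (esym H).
have := ltn_ord c; have := ltn_ord e; have : (e : nat) != c by [].
clear; lia.
Qed.

End Count.

Section Gen.
Variables (d : Order.disp_t) (P : finPOrderType d).
Implicit Types (x y z : P) (L : P -> nat).

Lemma lsuccP L x y : lsucc L x = Some y ->
  (x < y)%O /\ forall z, (x < z)%O -> L y <= L z.
Proof.
rewrite /lsucc; case: pickP => // y' /andP[Hxy /forallP H] [<-]; split => // z Hz.
exact: (implyP (H z)).
Qed.

Lemma lsucc_some L x : ~~ maximal x -> exists y, lsucc L x = Some y.
Proof.
move=> /forallPn [z]; rewrite negbK => Hz.
rewrite /lsucc; case: pickP => [y _|H]; first by exists y.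
case: (arg_minnP (fun y => L y) Hz) => y Hy Hmin.
move: (H y); rewrite Hy /=; move/negP; case; apply/forallP => w; apply/implyP; exact: Hmin.
Qed.

Lemma chain_spec L f x (c := chain_from L f x) :
  [/\ 0 < size c <= f.+1, nth x c 0 = x,
      (forall i, i.+1 < size c -> lsucc L (nth x c i) = Some (nth x c i.+1)) &
      (maximal (last x c) \/ size c = f.+1)].
Proof.
rewrite {}/c; elim: f x => [|f IH] x /=; first by split => //; right.
case: ifP => Hm /=; first by split => //; left.
have [y Hy] := lsucc_some L (negbT Hm); rewrite Hy.
have [/andP[H1 H2] H3 H4 H5] := IH y.
split => //=.
- case=> [|i] /=; first by move=> _; rewrite (set_nth_default y) // H3.
  rewrite ltnS => Hi; rewrite (set_nth_default y) ?H4 //; last by lia.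
  by rewrite (set_nth_default y x) //.
- case: H5 => [Hmax|->]; last by right.
  by left; move: Hmax; case: (chain_from L f y) H3 H1 => //= a s ->.
Qed.

Definition bij L := injective L /\ forall x, L x < #|P|.

Lemma bij_surj L : bij L -> forall i, i < #|P| -> exists x, L x = i.
Proof.
move=> [Hi Hl] i Hin.
pose f x := Ordinal (Hl x).
have finj : injective f by move=> a b /(congr1 val) /= /Hi.
have := inj_card_onto finj (eq_leq (card_ord _)) (Ordinal Hin).
by case/codomP => x /(congr1 val) /= ->; exists x.
Qed.

Definition good j L := forall x y, (x < y)%O -> j <= L x -> L x < L y.

Section Chain.
Variables (L : P -> nat) (HL : bij L) (v1 : P) (Hv1 : L v1 = 0).

Local Notation c := (prom_chain L).

Lemma prom_chainE : c = chain_from L #|P| v1.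
Proof.
rewrite /prom_chain; case: pickP => [v /eqP Hv|/(_ v1)]; last by rewrite Hv1 eqxx.
by have -> : v = v1 by apply: HL.1; rewrite Hv Hv1.
Qed.

Lemma L_pos x : x != v1 -> 0 < L x.
Proof. by move=> H; rewrite lt0n; apply/eqP => H0; move/eqP: H; apply; apply: HL.1; rewrite H0. Qed.

Lemma c_size : 0 < size c.
Proof. by rewrite prom_chainE; case: (chain_spec L #|P| v1) => /andP[]. Qed.

Lemma c_head : nth v1 c 0 = v1.
Proof. by rewrite prom_chainE; case: (chain_spec L #|P| v1). Qed.

Lemma c_step i : i.+1 < size c -> lsucc L (nth v1 c i) = Some (nth v1 c i.+1).
Proof. by rewrite prom_chainE; case: (chain_spec L #|P| v1) => _ _ H _; apply: H. Qed.

Lemma c_sorted : sorted (fun a b => (a < b)%O) c.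
Proof. apply/(sortedP v1) => i Hi; by case: (lsuccP (c_step Hi)). Qed.

Lemma c_uniq : uniq c.
Proof. apply: (sorted_uniq (@lt_trans _ _) (@ltxx _ _) c_sorted). Qed.

Lemma c_lt i l : i < l -> l < size c -> (nth v1 c i < nth v1 c l)%O.
Proof.
move=> Hil Hl; apply: (sorted_ltn_nth (@lt_trans _ _) v1 c_sorted) => //; rewrite inE //.
exact: ltn_trans Hil Hl.
Qed.

Lemma c_max : maximal (last v1 c).
Proof.
have := c_uniq; rewrite prom_chainE; case: (chain_spec L #|P| v1) => _ _ _ [//|Hs].
move/card_uniqP; rewrite Hs => Hc; have := max_card (mem (chain_from L #|P| v1)).
by rewrite Hc ltnn.
Qed.

Lemma v1_in : v1 \in c.
Proof. by rewrite -{1}c_head mem_nth // c_size. Qed.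

Definition g x := if x \in c then nth v1 c (index x c).+1 else x.
Definition h z := if z == v1 then #|P|.-1 else (L z).-1.

Lemma prom_hg x : promotion L x = h (g x).
Proof.
rewrite /promotion /g /h; case: ifP => Hx; last by rewrite ifF //; apply/negP => /eqP E; move: Hx; rewrite E v1_in.
case: ifP => Hi.
  rewrite ifF; last first.
    rewrite -{2}c_head nth_uniq ?c_uniq //; exact: ltn_trans Hi.
  by rewrite (set_nth_default v1).
by rewrite nth_default ?eqxx //; rewrite leqNgt Hi.
Qed.

Lemma g_inj : injective g.
Proof.
have Hsz : forall x, x \in c -> (index x c).+1 < size c -> nth v1 c (index x c).+1 \in c.
  by move=> x _ H; rewrite mem_nth.
move=> x y; rewrite /g.
have gin : forall z, z \in c -> nth v1 c (index z c).+1 \in c.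
  move=> z Hz; case: (ltnP (index z c).+1 (size c)) => H; first by rewrite mem_nth.
  by rewrite nth_default // v1_in.
case: ifP => Hx; case: ifP => Hy.
- move=> E.
  have Hix := index_mem x c; have Hiy := index_mem y c; rewrite Hx in Hix; rewrite Hy in Hiy.
  suff : index x c = index y c by move=> E2; rewrite -(nth_index v1 Hx) -(nth_index v1 Hy) E2.
  case: (ltnP (index x c).+1 (size c)) => Hx1; case: (ltnP (index y c).+1 (size c)) => Hy1.
  + by move/eqP: E; rewrite nth_uniq ?c_uniq // => /eqP [].
  + move: E; rewrite (nth_default v1 Hy1) -{2}c_head => /eqP; rewrite nth_uniq ?c_uniq ?c_size //.
  + move: E; rewrite (nth_default v1 Hx1) -{1}c_head => /eqP; rewrite nth_uniq ?c_uniq ?c_size //.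
  + have E1 : (index x c).+1 = size c by apply/eqP; rewrite eqn_leq Hx1 andbT; exact: Hix.
    have E2 : (index y c).+1 = size c by apply/eqP; rewrite eqn_leq Hy1 andbT; exact: Hiy.
    by apply: succn_inj; rewrite E1 E2.
- by move=> E; move: (gin x Hx); rewrite E Hy.
- by move=> E; move: (gin y Hy); rewrite -E Hx.
- by [].
Qed.

Lemma L_lt x : L x < #|P|.
Proof. exact: HL.2. Qed.

Lemma h_lt z : h z < #|P|.
Proof.
rewrite /h; case: ifP => _; last by apply: leq_ltn_trans (leq_pred _) (L_lt z).
by have := L_lt v1; case: #|P|.
Qed.

Lemma h_inj : injective h.
Proof.
move=> z w; rewrite /h.
have Hz := L_lt z; have Hw := L_lt w.
case: ifP => Hz1; case: ifP => Hw1.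
- by rewrite (eqP Hz1) (eqP Hw1).
- have := L_pos (negbT Hw1); move: Hw; clear; lia.
- have := L_pos (negbT Hz1); move: Hz; clear; lia.
- have := L_pos (negbT Hz1); have := L_pos (negbT Hw1) => A B E.
  apply: HL.1; move: A B E; clear; lia.
Qed.

Lemma prom_bij : bij (promotion L).
Proof.
split; last by move=> x; rewrite prom_hg h_lt.
by move=> x y; rewrite !prom_hg => /h_inj /g_inj.
Qed.

Lemma g_v1 x : x \in c -> g x != v1 -> (index x c).+1 < size c.
Proof.
rewrite /g => ->.
case: ltnP => // H; by rewrite nth_default ?eqxx.
Qed.

Lemma g_in x : x \in c -> (index x c).+1 < size c -> g x = nth v1 c (index x c).+1.
Proof. by rewrite /g => ->. Qed.

Lemma g_lt x : x \in c -> g x != v1 -> (x < g x)%O.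
Proof.
move=> Hx /(g_v1 Hx) Hs; rewrite g_in //.
by have [] := lsuccP (c_step Hs); rewrite nth_index.
Qed.

Lemma g_out x : x \notin c -> g x = x.
Proof. by rewrite /g => /negbTE ->. Qed.

Lemma keyK x y : (x < y)%O -> g x != v1 -> g y != v1 ->
  (g x < g y)%O \/ L (g x) < L (g y).
Proof.
move=> Hxy Hgx Hgy.
case: (boolP (x \in c)) => Hx; case: (boolP (y \in c)) => Hy.
- left; have Hs := g_v1 Hx Hgx; have Hs' := g_v1 Hy Hgy.
  rewrite !g_in //; apply: c_lt => //.
  have Hix := index_mem x c; have Hiy := index_mem y c; rewrite Hx in Hix; rewrite Hy in Hiy.
  case: (ltngtP (index x c) (index y c)) => // H.
  + have := c_lt H Hix; rewrite !nth_index // => Hyx.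
    by have := lt_asym x y; rewrite Hxy Hyx.
  + have : x = y by rewrite -(nth_index v1 Hx) -(nth_index v1 Hy) H.
    by move=> E; move: Hxy; rewrite E ltxx.
- right; have Hs := g_v1 Hx Hgx.
  have [_ Hmin] := lsuccP (c_step Hs); rewrite nth_index // in Hmin.
  have Hle := Hmin y Hxy.
  rewrite (g_out Hy) (g_in Hx Hs) ltn_neqAle Hle andbT.
  apply/negP => /eqP /HL.1 E.
  by move: Hy; rewrite -E mem_nth.
- left; rewrite (g_out Hx); exact: lt_trans Hxy (g_lt Hy Hgy).
- by left; rewrite (g_out Hx) (g_out Hy).
Qed.

Lemma prom_good j : 0 < j -> good j L -> good j.-1 (promotion L).
Proof.
move=> Hj Hg x y Hxy; rewrite !prom_hg.
case: (eqVneq (g x) v1) => Hgx.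
  have : x \in c /\ (index x c).+1 >= size c.
    move: Hgx; rewrite /g; case: ifP => Hx; last by move=> E; move: Hx; rewrite E v1_in.
    case: ltnP => // H; rewrite -{2}c_head => /eqP; rewrite nth_uniq ?c_uniq ?c_size //.
  case=> Hx Hs; have Hix := index_mem x c; rewrite Hx in Hix.
  have : index x c = (size c).-1.
    by apply: succn_inj; rewrite prednK ?c_size //; apply/eqP; rewrite eqn_leq Hs Hix.
  move=> E; have := c_max; rewrite -nth_last -E nth_index // => /forallP /(_ y).
  by rewrite Hxy.
have Lx := L_pos Hgx.
rewrite /h (negbTE Hgx).
case: (eqVneq (g y) v1) => Hgy.
  by rewrite ?eqxx => _; have := L_lt (g x); move: Lx; clear; lia.
rewrite ?(negbTE Hgy) => Hle.
have Ly := L_pos Hgy.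
have Hjx : j <= L (g x) by move: Hle Lx Hj; clear; lia.
have : L (g x) < L (g y) by case: (keyK Hxy Hgx Hgy) => // /Hg; apply.
move: Lx Ly; clear; lia.
Qed.

End Chain.

Lemma iter_inv L k : bij L -> k <= #|P| ->
  bij (iter k (@promotion _ P) L) /\ good (#|P| - k) (iter k (@promotion _ P) L).
Proof.
move=> HL; elim: k => [|k IH] Hk; rewrite ?iterS.
  split => // x y _; rewrite subn0 => H; have [_ Hl] := HL; by have := Hl x; rewrite ltnNge H.
have [Hb Hg] := IH (ltnW Hk).
have [v1 Hv1] := bij_surj Hb (leq_ltn_trans (leq0n _) (leq_trans (ltnSn k) Hk)).
split; [exact (prom_bij Hb Hv1)|].
have -> : #|P| - k.+1 = (#|P| - k).-1 by rewrite subnS.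
refine (prom_good Hb Hv1 _ Hg); by rewrite subn_gt0.
Qed.

Definition Tt a b := if a < b then b.-1 else a.
Definition Fb a b := if b == 0 then nat_of_bool (a == 1)
  else if (a == 0) && (b == 1) then 1 else b.-1.

Lemma Tstep a b : a != b -> Tt a.-1 (Fb a b) = (Tt a b).-1.
Proof.
rewrite /Tt /Fb; case: a => [|[|a]]; case: b => [|[|b]] //= => H; repeat case: ifP => ?; lia.
Qed.

Lemma T0 a b : a != b -> (Tt a b == 0) = (a == 0) && (b == 1).
Proof. rewrite /Tt; case: a => [|[|a]]; case: b => [|[|b]] //= => H; repeat case: ifP => ?; lia. Qed.

Section Spec.
Variables (x0 x1 : P) (H0 : forall y, y != x0 -> (x0 < y)%O)
  (H1 : forall y, y != x0 -> y != x1 -> (x1 < y)%O) (Hx10 : x1 != x0).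

Lemma x01 : (x0 < x1)%O.
Proof. exact: H0. Qed.

Lemma above_x1 z : (x1 < z)%O -> z != x0 /\ z != x1.
Proof.
move=> Hz; split; apply/eqP => E; move: Hz; rewrite E ?ltxx //.
by move=> H; have := lt_asym x0 x1; rewrite x01 H.
Qed.

Lemma n_ge2 : 1 < #|P|.
Proof.
have : #|[set x0; x1]| <= #|P| by apply: max_card.
by rewrite cards2 eq_sym Hx10.
Qed.

Lemma max_x1_n : maximal x1 -> #|P| = 2.
Proof.
move=> /forallP Hm; apply/eqP; rewrite eqn_leq n_ge2 andbT.
have : [set: P] \subset [set x0; x1].
  apply/subsetP => y _; rewrite !inE.
  case: (eqVneq y x0) => //= Hy0; case: (eqVneq y x1) => //= Hy1.
  by have := Hm y; rewrite H1.
move/subset_leq_card; rewrite cardsT cards2 eq_sym Hx10 //.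
Qed.

Section Step.
Variables (L : P -> nat) (HL : bij L) (v1 : P) (Hv1 : L v1 = 0).
Local Notation c := (prom_chain L).
Let vin := v1_in HL Hv1.
Let cuniq := c_uniq HL Hv1.
Let csize := c_size HL Hv1.
Let chead := c_head HL Hv1.

Lemma x0_in : x0 \in c -> x0 = v1.
Proof.
move=> Hx; have Hix := index_mem x0 c; rewrite Hx in Hix.
case E: (index x0 c) => [|i].
  by rewrite -(nth_index v1 Hx) E chead.
have Hix' : i.+1 < size c by rewrite -E.
have := c_lt HL Hv1 (ltn0Sn i) Hix'; rewrite chead -E nth_index // => Hv.
case: (eqVneq v1 x0) => [//|/H0 H]; by have := lt_asym x0 v1; rewrite H Hv.
Qed.

Lemma next_label x w : x \in c -> (index x c).+1 < size c -> (x < w)%O ->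
  (forall z, (x < z)%O -> L w <= L z) -> L (g L v1 x) = L w.
Proof.
move=> Hx Hs Hw Hmin; rewrite (g_in v1 Hx Hs).
have [Hlt Hm] := lsuccP (c_step HL Hv1 Hs); rewrite nth_index // in Hlt Hm.
by apply/eqP; rewrite eqn_leq Hm // Hmin.
Qed.

Lemma lab_ex i : i < #|P| -> exists w, L w = i.
Proof. move=> Hi; exact (bij_surj HL Hi). Qed.

Lemma x0_case : L x0 = 0 ->
  [/\ x0 = v1, 1 < size c & L (nth v1 c 1) = 1].
Proof.
move=> Ha; have E : x0 = v1 by apply: HL.1; rewrite Ha Hv1.
have Hs : 1 < size c.
  rewrite ltnNge; apply/negP => Hs.
  have Hsz := c_size HL Hv1.
  have : maximal (last v1 c) := c_max HL Hv1.
  rewrite -nth_last (_ : (size c).-1 = 0); last by move: Hs Hsz; clear; lia.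
  rewrite chead -E => /forallP /(_ x1); by rewrite x01.
have Hin : x0 \in c by rewrite E vin.
have Hi : index x0 c = 0 by rewrite E -{1}chead index_uniq ?cuniq ?csize.
have [w Hw] := lab_ex n_ge2.
have Hw0 : w != x0 by apply/eqP => Ew; move: Hw; rewrite Ew Ha.
split => //.
have Hmin : forall z, (x0 < z)%O -> L w <= L z.
  move=> z Hz; rewrite Hw lt0n; apply/eqP => Hz0.
  have : z = x0 by apply: HL.1; rewrite Hz0 Ha.
  by move=> Ez; move: Hz; rewrite Ez ltxx.
have Hs' : (index x0 c).+1 < size c by rewrite Hi.
have := next_label Hin Hs' (H0 Hw0) Hmin.
by rewrite (g_in v1 Hin Hs') Hi Hw.
Qed.

Lemma prom_x0 : promotion L x0 = (L x0).-1.
Proof.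
rewrite (prom_hg HL Hv1); case: (eqVneq (L x0) 0) => Ha.
  have [E Hs Hl] := x0_case Ha.
  have Hin : x0 \in c by rewrite E vin.
  have Hi : index x0 c = 0 by rewrite E -{1}chead index_uniq ?cuniq ?csize.
  rewrite (g_in v1 Hin) Hi // /h ifF ?Hl ?Ha //.
  by rewrite -{2}chead nth_uniq ?cuniq ?csize.
have Hn : x0 \notin c by apply/negP => /x0_in E; move: Ha; rewrite E Hv1.
rewrite (g_out v1 Hn) /h ifF //; apply/eqP => E; move: Ha; by rewrite E Hv1.
Qed.

Lemma lab_above z : (x1 < z)%O -> L z != L x0 /\ L z != L x1.
Proof.
move=> /above_x1 [A B]; split; apply/negP => /eqP /HL.1 E; by rewrite E eqxx in A B.
Qed.

Lemma x1_max_case : maximal x1 -> #|P| = 2 /\ L x0 + L x1 = 1.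
Proof.
move=> Hm; have Hn := max_x1_n Hm; split => //.
have := HL.2 x0; have := HL.2 x1; rewrite Hn.
have : L x0 != L x1 by apply/negP => /eqP /HL.1 E; move: Hx10; rewrite E eqxx.
clear; lia.
Qed.

Lemma next_x1 : x1 \in c -> (index x1 c).+1 < size c ->
  [/\ g L v1 x1 != v1, 0 < L (g L v1 x1), L (g L v1 x1) != L x0, L (g L v1 x1) != L x1 &
   forall m w, L w = m -> w != x0 -> w != x1 -> (forall z, (x1 < z)%O -> m <= L z) ->
     L (g L v1 x1) = m].
Proof.
move=> Hin Hs.
have Hu : (x1 < g L v1 x1)%O.
  have := c_step HL Hv1 Hs; rewrite nth_index // => /lsuccP [H _]; by rewrite (g_in v1 Hin Hs).
have [Hu0 Hu1] := lab_above Hu.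
have Hneqv : g L v1 x1 != v1.
  by rewrite (g_in v1 Hin Hs) -{2}chead nth_uniq ?cuniq ?csize.
split => //; first exact (L_pos HL Hv1 Hneqv).
move=> m w Hw Hw0 Hw1 Hm; rewrite -Hw; apply: next_label => //; first exact: H1.
by move=> z Hz; rewrite Hw; apply: Hm.
Qed.

Lemma lab_ge z m : (x1 < z)%O -> (forall k, k < m -> k = L x0 \/ k = L x1) -> m <= L z.
Proof.
move=> Hz Hk; have [A B] := lab_above Hz.
rewrite leqNgt; apply/negP => /Hk [] E; by rewrite E eqxx in A B.
Qed.

Lemma prom_x1 : promotion L x1 =
  if L x1 == 0 then nat_of_bool (L x0 == 1)
  else if (L x0 == 0) && (L x1 == 1) then 1 else (L x1).-1.
Proof.
have Hne : L x0 != L x1 by apply/negP => /eqP /HL.1 E; move: Hx10; rewrite E eqxx.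
have Hn2 := n_ge2.
rewrite (prom_hg HL Hv1); case: (eqVneq (L x1) 0) => Hb.
  have E1 : x1 = v1 by apply: HL.1; rewrite Hb Hv1.
  have Hin : x1 \in c by rewrite E1 vin.
  have Hi : index x1 c = 0 by rewrite E1 -{1}chead index_uniq ?cuniq ?csize.
  case: (ltnP 1 (size c)) => Hs.
    have Hs' : (index x1 c).+1 < size c by rewrite Hi.
    have [Hv Lp Ha' Hb' Hval] := next_x1 Hin Hs'.
    rewrite /h (negbTE Hv).
    case: (eqVneq (L x0) 1) => Ha.
      have H2 : 2 < #|P| by have := HL.2 (g L v1 x1); move: Lp Ha' Ha; clear; lia.
      have [w Hw] := lab_ex H2.
      rewrite (Hval 2 w Hw) //.
      - by apply/eqP => E; move: Hw; rewrite E Ha.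
      - by apply/eqP => E; move: Hw; rewrite E Hb.
      - by move=> z Hz; apply: lab_ge => // k Hk; move: Hk; rewrite Ha Hb; clear; lia.
    have [w Hw] := lab_ex Hn2.
    rewrite (Hval 1 w Hw) //.
    - by apply/eqP => E; move: Hw Ha; rewrite E => ->; rewrite eqxx.
    - by apply/eqP => E; move: Hw; rewrite E Hb.
    - by move=> z Hz; apply: lab_ge => // k Hk; move: Hk; rewrite Hb; clear; lia.
  have Hgv : g L v1 x1 = v1 by rewrite /g Hin Hi nth_default.
  have Hmax : maximal x1.
    have := c_max HL Hv1; rewrite -nth_last.
    by rewrite (_ : (size c).-1 = 0) ?chead -?E1 //; have := csize; move: Hs; clear; lia.
  have [Hn Hs01] := x1_max_case Hmax.
  rewrite Hgv /h eqxx Hn; move: Hs01; rewrite Hb addn0 => ->; done.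
case: ifP => Hab.
  have [Ha Hb1] : L x0 = 0 /\ L x1 = 1 by case/andP: Hab => /eqP -> /eqP ->.
  have [E0 Hs Hl] := x0_case Ha.
  have Ex1 : nth v1 c 1 = x1 by apply: HL.1; rewrite Hl Hb1.
  have Hin : x1 \in c by rewrite -Ex1 mem_nth.
  have Hi : index x1 c = 1 by rewrite -Ex1 index_uniq ?cuniq.
  case: (ltnP 2 (size c)) => Hs2.
    have Hs' : (index x1 c).+1 < size c by rewrite Hi.
    have [Hv Lp Ha' Hb' Hval] := next_x1 Hin Hs'.
    rewrite /h (negbTE Hv).
    have H2 : 2 < #|P| by have := HL.2 (g L v1 x1); move: Lp Ha' Hb'; rewrite Ha Hb1; clear; lia.
    have [w Hw] := lab_ex H2.
    rewrite (Hval 2 w Hw) //.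
    - by apply/eqP => E; move: Hw; rewrite E Ha.
    - by apply/eqP => E; move: Hw; rewrite E Hb1.
    - by move=> z Hz; apply: lab_ge => // k Hk; move: Hk; rewrite Ha Hb1; clear; lia.
  have Hgv : g L v1 x1 = v1 by rewrite /g Hin Hi nth_default.
  have Hmax : maximal x1.
    have := c_max HL Hv1; rewrite -nth_last.
    by rewrite (_ : (size c).-1 = 1) ?Ex1 //; move: Hs Hs2; clear; lia.
  have [Hn _] := x1_max_case Hmax.
  by rewrite Hgv /h eqxx Hn.
have Hn : x1 \notin c.
  apply/negP => Hin.
  have Hix := index_mem x1 c; rewrite Hin in Hix.
  case E: (index x1 c) => [|j].
    by move: Hb; rewrite -(nth_index v1 Hin) E chead -Hv1 eqxx.
  have Hj : j.+1 < size c by rewrite -E.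
  have := c_lt HL Hv1 (ltnSn j) Hj; rewrite -E nth_index // => Hlt.
  have Eu : nth v1 c j = x0.
    apply/eqP; apply/negP => Hu0.
    have Hu1 : nth v1 c j != x1 by apply/eqP => E'; move: Hlt; rewrite E' ltxx.
    by have := lt_asym x1 (nth v1 c j); rewrite Hlt (H1 (introN idP Hu0) Hu1).
  have Hx0in : x0 \in c by rewrite -Eu mem_nth // (ltn_trans _ Hj).
  have E0 := x0_in Hx0in.
  have Ha : L x0 = 0 by rewrite E0.
  have [_ Hs Hl] := x0_case Ha.
  have Hj0 : j = 0.
    have := index_uniq v1 (ltn_trans (ltnSn j) Hj) cuniq; rewrite Eu E0.
    by rewrite -{1}chead index_uniq ?cuniq ?csize.
  move: Hab; rewrite Ha eqxx /=; move: Hl; rewrite -Hj0 -E nth_index // => ->.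
  by rewrite eqxx.
rewrite (g_out v1 Hn) /h ifF //.
by apply/eqP => E; move: Hb; rewrite E Hv1 eqxx.
Qed.

End Step.
Lemma linext_only L : bij L -> is_linext L -> (L x0 == 0) && (L x1 == 1).
Proof.
move=> HL; have Hn2 := n_ge2.
have Hne : L x0 != L x1 by apply/negP => /eqP /HL.1 E; move: Hx10; rewrite E eqxx.
move=> /forallP Hl.
have Hlt : forall x y, (x < y)%O -> L x < L y by move=> x y; apply/implyP; exact: (forallP (Hl x) y).
have [w Hw] := bij_surj HL (ltn_trans (ltn0Sn 0) Hn2).
have Ha : L x0 = 0.
  case: (eqVneq w x0) => [<-//|/H0 /Hlt]; by rewrite Hw.
have [w' Hw'] := bij_surj HL Hn2.
case: (eqVneq w' x1) => [E|Hw1]; first by rewrite Ha -E Hw'.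
have Hw0 : w' != x0 by apply/eqP => E; move: Hw'; rewrite E Ha.
have := Hlt _ _ (H1 Hw0 Hw1); rewrite Hw' ltnS leqn0 => /eqP Hb.
by move: Hne; rewrite Ha Hb.
Qed.

Lemma linext_if L : bij L -> good 3 L -> L x0 = 0 -> L x1 = 1 -> is_linext L.
Proof.
move=> HL Hg Ha Hb; apply/forallP => x; apply/forallP => y; apply/implyP => Hxy.
case: (eqVneq x x0) => [Ex|Hx0].
  rewrite Ex Ha lt0n; apply/eqP => E; have Ey : y = x0 by apply: HL.1; rewrite E Ha.
  by move: Hxy; rewrite Ex Ey ltxx.
case: (eqVneq x x1) => [Ex|Hx1].
  rewrite Ex in Hxy; have [A B] := lab_above HL Hxy.
  rewrite Ex; move: A B; rewrite Ha Hb; clear; lia.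
have Hx := H1 Hx0 Hx1.
have Hy : (x1 < y)%O := lt_trans Hx Hxy.
have [A B] := lab_above HL Hx; have [C D] := lab_above HL Hy.
have Nxy : L x != L y.
  by apply/negP => /eqP /HL.1 E; move: Hxy; rewrite E ltxx.
case: (leqP 3 (L x)) => H3; first exact: Hg.
move: A B C D Nxy H3; rewrite Ha Hb; clear; lia.
Qed.

Lemma iter_step L k : bij L -> k < #|P| ->
  iter k.+1 (@promotion _ P) L x0 = (iter k (@promotion _ P) L x0).-1 /\
  iter k.+1 (@promotion _ P) L x1 =
    Fb (iter k (@promotion _ P) L x0) (iter k (@promotion _ P) L x1).
Proof.
move=> HL Hk; have [Hb _] := iter_inv HL (ltnW Hk).
have [v1 Hv1] := bij_surj Hb (leq_ltn_trans (leq0n _) Hk).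
rewrite iterS; split; first exact: (prom_x0 Hb Hv1).
by rewrite (prom_x1 Hb Hv1).
Qed.

Lemma T_iter L k : bij L -> k < #|P| ->
  Tt (iter k (@promotion _ P) L x0) (iter k (@promotion _ P) L x1) = Tt (L x0) (L x1) - k.
Proof.
move=> HL; elim: k => [|k IH] Hk; first by rewrite subn0.
have [E0 E1] := iter_step HL (ltnW Hk).
have [Hb _] := iter_inv HL (ltnW (ltnW Hk)).
have Hne : iter k (@promotion _ P) L x0 != iter k (@promotion _ P) L x1.
  by apply/negP => /eqP /Hb.1 E; move: Hx10; rewrite E eqxx.
by rewrite E0 E1 Tstep // IH ?subnS // ltnW.
Qed.

Lemma lin_only_iter L k : bij L -> k < #|P| ->
  is_linext (iter k (@promotion _ P) L) -> Tt (L x0) (L x1) <= k.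
Proof.
move=> HL Hk Hl.
have [Hb _] := iter_inv HL (ltnW Hk).
have := linext_only Hb Hl; rewrite -T0.
  by rewrite T_iter // subn_eq0.
by apply/negP => /eqP /Hb.1 E; move: Hx10; rewrite E eqxx.
Qed.

Lemma lin_if_iter L k : bij L -> #|P| - 3 <= k -> k <= #|P| - 2 ->
  Tt (L x0) (L x1) <= k -> is_linext (iter k (@promotion _ P) L).
Proof.
move=> HL Hk1 Hk HT; have Hn2 := n_ge2.
have [Hb Hg] := iter_inv HL (leq_trans Hk (leq_subr _ _)).
have Hg3 : good 3 (iter k (@promotion _ P) L).
  move=> x y Hxy H3; apply: Hg => //; apply: leq_trans H3; move: Hk1 Hn2; clear; lia.
have Hne : iter k (@promotion _ P) L x0 != iter k (@promotion _ P) L x1.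
  by apply/negP => /eqP /Hb.1 E; move: Hx10; rewrite E eqxx.
have := T0 Hne; rewrite (T_iter HL); last by move: Hk Hn2; clear; lia.
have -> : Tt (L x0) (L x1) - k == 0 by rewrite subn_eq0.
move/esym/andP => [/eqP A /eqP B]; exact: linext_if Hb Hg3 A B.
Qed.

Lemma qt_iff L : bij L ->
  quasi_tangled L = (L x1 == #|P|.-1) || (L x0 == #|P| - 2).
Proof.
move=> HL; have Hn2 := n_ge2.
have -> : quasi_tangled L = (Tt (L x0) (L x1) == #|P| - 2).
  rewrite /quasi_tangled /has_sorting_time; apply/andP/idP.
  - case=> Hl /forallP Hj.
    have Hlt2 : #|P| - 2 < #|P| by move: Hn2; clear; lia.
    rewrite eqn_leq (lin_only_iter HL Hlt2 Hl) /=.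
    case: (ltnP 2 #|P|) => Hn3; last by rewrite (_ : #|P| - 2 = 0) //; move: Hn3; clear; lia.
    rewrite leqNgt; apply/negP => Hlt.
    have Hj' : #|P| - 3 < #|P| - 2 by move: Hn3; clear; lia.
    have := Hj (Ordinal Hj'); rewrite (lin_if_iter HL) //=; move: Hlt Hn3; clear; lia.
  - move=> /eqP HT; split; first by apply: lin_if_iter => //; rewrite ?HT //; clear; lia.
    apply/forallP => j; apply/negP => /(lin_only_iter HL) H.
    have Hj := ltn_ord j; have : Tt (L x0) (L x1) <= j by apply: H; move: Hj; clear; lia.
    by rewrite HT leqNgt Hj.
have Ha := HL.2 x0; have Hb := HL.2 x1.
have Hne : L x0 != L x1 by apply/negP => /eqP /HL.1 E; move: Hx10; rewrite E eqxx.
rewrite /Tt; case: ltnP => H; move: Ha Hb Hne Hn2 H; clear; lia.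
Qed.

End Spec.

Lemma min_below (y : P) : exists2 z, minimal z & (z <= y)%O.
Proof.
pose F z := #|[set w : P | (w < z)%O]|.
case: (arg_minnP F (P := fun z => (z <= y)%O) (lexx y)) => z Hzy Hmin.
exists z => //; apply/forallP => w; apply/negP => Hw.
have := Hmin w (le_trans (ltW Hw) Hzy); rewrite leqNgt; apply/negP.
rewrite negbK /F; apply: proper_card; apply/properP; split.
  by apply/subsetP => v; rewrite !inE => Hv; exact: lt_trans Hv Hw.
by exists w; rewrite !inE ?Hw ?ltxx.
Qed.

Lemma cover_below (x y : P) : (x < y)%O -> exists2 z, covers x z & (z <= y)%O.
Proof.
move=> Hxy; pose F z := #|[set w : P | (w < z)%O]|.
case: (arg_minnP F (P := fun z => (x < z)%O && (z <= y)%O) (introT andP (conj Hxy (lexx y)))).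
move=> z /andP [Hxz Hzy] Hmin.
exists z => //; rewrite /covers Hxz /=; apply/forallP => w; apply/negP => /andP [Hxw Hw].
have := Hmin w; rewrite Hxw (le_trans (ltW Hw) Hzy) => /(_ isT); rewrite leqNgt; apply/negP.
rewrite negbK /F.
apply: proper_card; apply/properP; split.
  by apply/subsetP => v; rewrite !inE => Hv; exact: lt_trans Hv Hw.
by exists w; rewrite !inE ?Hw ?ltxx.
Qed.

End Gen.

Theorem mainTheorem8 (d : Order.disp_t) (P : finPOrderType d) (x0 : P)
  (Hmin : forall y : P, minimal y <-> y = x0)
  (Hcov : #|[set y : P | covers x0 y]| = 1) :
  #|[set L : {ffun P -> 'I_#|P|} |
       injectiveb L && quasi_tangled (fun x => nat_of_ord (L x))]|
  = (2 * (#|P| - 1)`! - (#|P| - 2)`!)%N.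
Proof.
have H0 : forall y : P, y != x0 -> (x0 < y)%O.
  move=> y Hy; have [z Hz Hzy] := min_below y.
  have Ez : z = x0 by apply/Hmin.
  by rewrite lt_neqAle eq_sym Hy -Ez.
have [x1 Ex1] : exists x1, [set y : P | covers x0 y] = [set x1] by apply/cards1P; rewrite Hcov.
have Hc1 : covers x0 x1.
  have : x1 \in [set y : P | covers x0 y] by rewrite Ex1 set11.
  by rewrite inE.
have Hx01 : (x0 < x1)%O by case/andP: Hc1.
have Hx10 : x1 != x0 by apply/eqP => E; move: Hx01; rewrite E ltxx.
have H1 : forall y, y != x0 -> y != x1 -> (x1 < y)%O.
  move=> y Hy0 Hy1; have [z Hz Hzy] := cover_below (H0 y Hy0).
  have : z \in [set y : P | covers x0 y] by rewrite inE.
  rewrite Ex1 inE => /eqP Ez.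
  by rewrite lt_neqAle eq_sym Hy1 -Ez.
have Hn2 := n_ge2 Hx10.
set n := #|P| in Hn2 *.
have Hc1n : n.-1 < n by move: Hn2; clear; lia.
have Hc0n : n - 2 < n by move: Hn2; clear; lia.
pose c1 : 'I_n := Ordinal Hc1n.
pose c0 : 'I_n := Ordinal Hc0n.
have -> : [set L : {ffun P -> 'I_n} | injectiveb L && quasi_tangled (fun x => nat_of_ord (L x))]
   = fiber x1 c1 :|: fiber x0 c0.
  apply/setP => L; rewrite !inE.
  case: (boolP (injectiveb L)) => Hi //=.
  have HL : bij (fun x => nat_of_ord (L x)).
    split; last by move=> x; exact: ltn_ord.
    by move=> a b /val_inj; apply/injectiveP.
  by rewrite (qt_iff H0 H1 Hx10 HL).
have Hd : #|P| = n by [].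
rewrite cardsU (card_fiber Hd) (card_fiber Hd).
have -> : fiber x1 c1 :&: fiber x0 c0 = fiber2 x1 x0 c1 c0.
  by apply/setP => L; rewrite !inE; case: (injectiveb L).
have Hcc : c0 != c1 by apply/negP => /eqP /(congr1 val) /=; move: Hn2; clear; lia.
rewrite (card_fiber2 Hd Hx10 Hcc) subn1 subn2.
by rewrite mul2n addnn.
Qed.
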